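(* Let $n$ and $k$ be positive integers such that $n \geq 3(n-k)$ and $n \geq k$. Then $$\left|\mathcal{K}_{k+1}(n+1)\right| = (n-k+1)\,\left|\mathcal{K}_{k}(n)\right|,$$ where $\mathcal{K}_k(n)$ denotes the set of linear chord diagrams of size $n$ in which every chord has length at least $k$.
   Context: A linear chord diagram of size $n$ is a partition of the set $\{1,2,\dots,2n\}$ into blocks of size two, called chords. For a chord $c=\{s_c,e_c\}$ with $s_c<e_c$, $s_c$ is its start point, $e_c$ its end point, and its length is $e_c-s_c$. For positive integers $k,n$, $\mathcal{K}_k(n)$ is the set of all linear chord diagrams of size $n$ such that every chord has length at least $k$. *)

(* Defs.v *)
From mathcomp Require Import all_boot.
Set Implicit Arguments. Unset Strict Implicit. Unset Printing Implicit Defensive.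

(* Points {1,...,2n} are represented by 'I_(2n) = {0,...,2n-1} (shift by one;
   chord lengths are differences, hence unaffected). *)

Definition chord_diagram (n : nat) (P : {set {set 'I_(n.*2)}}) : bool :=
  partition P [set: 'I_(n.*2)] && [forall c in P, #|c| == 2].

Definition min_chord_length (n k : nat) (P : {set {set 'I_(n.*2)}}) : bool :=
  [forall c in P, forall i in c, forall j in c, (i < j) ==> (k <= j - i)].

Definition K (k n : nat) : {set {set {set 'I_(n.*2)}}} :=
  [set P | chord_diagram P & min_chord_length k P].

(* Main.v *)
Require Import Defs.
From mathcomp Require Import all_boot.
From mathcomp Require Import zify.
Set Implicit Arguments. Unset Strict Implicit. Unset Printing Implicit Defensive.

Definition dist (i j : nat) := (i - j) + (j - i).

Definition Inv (k n : nat) : {set {ffun 'I_(n.*2) -> 'I_(n.*2)}} :=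
  [set f : {ffun 'I_(n.*2) -> 'I_(n.*2)} | [forall i, (f (f i) == i) && (k <= dist i (f i))]].

Lemma distE x y : x < y -> dist x y = y - x.
Proof. rewrite /dist; lia. Qed.
Lemma distC x y : dist x y = dist y x.
Proof. rewrite /dist; lia. Qed.

Section Bridge.
Variables (k n : nat).
Hypothesis k_gt0 : 0 < k.
Local Notation T := 'I_(n.*2).

Definition toP (f : {ffun T -> T}) : {set {set T}} := [set [set i; f i] | i : T].

Lemma InvP f : f \in Inv k n -> (forall i : T, f (f i) = i) /\ (forall i : T, k <= dist i (f i)).
Proof.
rewrite inE => /forallP H; split=> i; have /andP[/eqP ? ?] := H i => //.
Qed.

Lemma fneq (f : {ffun T -> T}) (i : T) : k <= dist i (f i) -> f i != i.
Proof. move=> H; apply/eqP=> E; move: H; rewrite E /dist; lia. Qed.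

Lemma pair_same (f : {ffun T -> T}) (i x : T) : (forall i : T, f (f i) = i) -> x \in [set i; f i] ->
  [set x; f x] = [set i; f i].
Proof.
move=> inv /set2P [->|->] //; rewrite inv setUC //.
Qed.

Lemma toP_K f : f \in Inv k n -> toP f \in K k n.
Proof.
move=> /InvP [inv dk]; rewrite inE; apply/andP; split.
  apply/andP; split.
    apply/and3P; split.
    - apply/eqP/setP=> x; rewrite inE; apply/bigcupP; exists [set x; f x].
        by apply/imsetP; exists x.
      by rewrite !inE eqxx.
    - apply/trivIsetP=> A B /imsetP[i _ ->] /imsetP[j _ ->] neq.
      rewrite -setI_eq0; apply/eqP/setP=> x; rewrite !inE.
      apply/negbTE/negP=> /andP[xi xj].
      have e1 := pair_same inv (x:=x) (i:=i); have e2 := pair_same inv (x:=x) (i:=j).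
      rewrite !inE in e1 e2; rewrite -e1 ?e2 ?eqxx in neq => //.
    - apply/negP=> /imsetP[i _ E]; have : i \in set0 by rewrite E !inE eqxx.
      by rewrite inE.
  apply/forallP=> c; apply/implyP=> /imsetP[i _ ->]; rewrite cards2.
  by have := fneq (dk i); rewrite eq_sym => ->.
apply/forallP=> c; apply/implyP=> /imsetP[a _ ->].
apply/forallP=> i; apply/implyP=> /set2P Hi; apply/forallP=> j; apply/implyP=> /set2P Hj.
apply/implyP=> ij; have := dk a.
move: ij; case: Hi Hj => -> [] -> //; rewrite ?ltnn //.
  by move=> h; rewrite distE.
by move=> h; rewrite distC distE.
Qed.

Lemma toP_inj : {in Inv k n &, injective toP}.
Proof.
move=> f g /InvP[invf df] /InvP[invg dg] E; apply/ffunP=> i.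
have : [set i; f i] \in toP g by rewrite -E; apply/imsetP; exists i.
case/imsetP=> j _ Ej.
have ij : i \in [set j; g j] by rewrite -Ej !inE eqxx.
rewrite -(pair_same invg ij) in Ej.
have : f i \in [set i; g i] by rewrite -Ej !inE eqxx orbT.
case/set2P=> // fi; by have := fneq (df i); rewrite fi eqxx.
Qed.

Definition ofP (P : {set {set T}}) : {ffun T -> T} :=
  [ffun i => odflt i [pick j in pblock P i :\ i]].

Lemma ofP_spec P (i : T) : P \in K k n ->
  pblock P i = [set i; ofP P i] /\ ofP P i != i.
Proof.
rewrite inE => /andP[/andP[/and3P[/eqP cov triv _] /forallP c2] _].
have iP : i \in cover P by rewrite cov inE.
have /cards2P[x [y [xy E]]] := implyP (c2 _) (pblock_mem iP).
have := mem_pblock P i; rewrite iP E => /set2P ix.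
have ex : exists y', (y' != i) /\ [set x; y] = [set i; y'].
  case: ix => ->; [exists y | exists x]; split => //; rewrite 1?eq_sym //.
  by rewrite setUC.
case: ex => y' [y'i E'].
rewrite /ofP ffunE E E'.
case: pickP => [j|]; last first.
  by move=> /(_ y'); rewrite !inE y'i eqxx orbT.
rewrite !inE => /andP[ji /orP[/eqP E1|/eqP ->]] //=; first by rewrite E1 eqxx in ji.
Qed.

Lemma ofP_Inv P : P \in K k n -> ofP P \in Inv k n /\ toP (ofP P) = P.
Proof.
move=> PK; have := PK; rewrite inE => /andP[/andP[/and3P[/eqP cov triv nz] /forallP c2] /forallP ml].
have inv : forall i : T, ofP P (ofP P i) = i.
  move=> i; have [E1 n1] := ofP_spec i PK.
  have iP : i \in cover P by rewrite cov inE.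
  have : pblock P (ofP P i) = pblock P i.
    apply: def_pblock => //; first exact: pblock_mem.
    by rewrite E1 !inE eqxx orbT.
  have [E2 n2] := ofP_spec (ofP P i) PK.
  rewrite E1 E2 => E; have : ofP P (ofP P i) \in [set i; ofP P i] by rewrite -E !inE eqxx orbT.
  by case/set2P=> // h; rewrite h eqxx in n2.
split.
  rewrite inE; apply/forallP=> i; rewrite inv eqxx /=.
  have [E1 n1] := ofP_spec i PK.
  have iP : i \in cover P by rewrite cov inE.
  have := implyP (ml _) (pblock_mem iP); rewrite E1 => /forallP H.
  have hi := implyP (H i) (setU11 _ _); have hj := implyP (H (ofP P i)) (setU1r _ (set11 _)).
  move/forallP: hi => hi; move/forallP: hj => hj.
  have := implyP (hi (ofP P i)) (setU1r _ (set11 _)).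
  have := implyP (hj i) (setU11 _ _).
  move: n1; case: (ltngtP i (ofP P i)) => h.
  - by rewrite distE.
  - by rewrite distC distE.
  - by move/val_inj: h => h; rewrite -h; move/negP.
apply/setP=> B; apply/imsetP/idP.
  case=> i _ ->; have [E1 _] := ofP_spec i PK; rewrite -E1.
  by apply: pblock_mem; rewrite cov inE.
move=> BP; have : B != set0 by apply: contraNneq nz => <-.
case/set0Pn=> i iB; exists i => //.
have [E1 _] := ofP_spec i PK; rewrite -E1; symmetry; exact: def_pblock.
Qed.

Lemma cardK_Inv : #|K k n| = #|Inv k n|.
Proof.
have -> : K k n = toP @: Inv k n.
  apply/setP=> P; apply/idP/imsetP.
    move=> PK; have [h1 h2] := ofP_Inv PK; by exists (ofP P).
  by case=> f fI ->; exact: toP_K.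
exact: card_in_imset toP_inj.
Qed.

End Bridge.


Definition validn (N d : nat) (g : nat -> nat) :=
  forall i, i < N -> [/\ g i < N, g (g i) = i & d <= dist i (g i)].


Section Main.
Variables n m : nat.
Hypothesis Hm : 3 * m <= n.

Definition up x := if x < 2 * m then x else if x < n + m then x + 1 else x + 2.
Definition down y := if y <= 2 * m then y else if y <= n + m + 1 then y - 1 else y - 2.

Definition Phi (g : nat -> nat) (s : nat) (y : nat) : nat :=
  if y == n + m + 1 then s
  else if y == 2 * m then (if s < 2 * m then up (g s) else n + m + 1)
  else let x := down y in
    if (s < 2 * m) && (x == s) then n + m + 1
    else if (s < 2 * m) && (x == g s) then 2 * m
    else up (g x).

Definition Psi (h : nat -> nat) (x : nat) : nat :=
  down (let z := h (up x) in
        if z == n + m + 1 then h (2 * m)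
        else if z == 2 * m then h (n + m + 1) else z).

Definition opt (g : nat -> nat) (s : nat) : bool :=
  (s <= 2 * m) && ((s == 2 * m) || (n + m <= g s)).

Ltac des := repeat (match goal with |- context[if ?b then _ else _] => destruct b eqn:? end
  || match goal with H : context[if ?b then _ else _] |- _ => destruct b eqn:? end).
Ltac crush := unfold up, down, dist in *; des; lia.

Lemma up_t x : (up x == 2 * m) = false.
Proof. apply/eqP; rewrite /up; repeat case: ifP => ?; lia. Qed.
Lemma up_q x : (up x == n + m + 1) = false.
Proof. apply/eqP; rewrite /up; repeat case: ifP => ?; lia. Qed.
Lemma down_up x : down (up x) = x.
Proof. crush. Qed.
Lemma up_down y : y != 2 * m -> y != n + m + 1 -> up (down y) = y.
Proof. move=> /eqP h1 /eqP h2; crush. Qed.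
Lemma up_lt x : x < 2 * n -> up x < 2 * n + 2.
Proof. crush. Qed.
Lemma down_lt y : y < 2 * n + 2 -> y != 2 * m -> y != n + m + 1 -> down y < 2 * n.
Proof. move=> h0 /eqP h1 /eqP h2; crush. Qed.

Lemma span g x : validn (2 * n) (n - m) g -> x < 2 * n -> n - m + 1 <= dist (up x) (up (g x)).
Proof.
move=> V hx; have [h1 h2 h3] := V x hx; move: h1 h3; crush.
Qed.

Lemma Phi_q g s : Phi g s (n + m + 1) = s.
Proof. by rewrite /Phi eqxx. Qed.
Lemma Phi_t g s : Phi g s (2 * m) = if s < 2 * m then up (g s) else n + m + 1.
Proof. rewrite /Phi ifF ?eqxx //; apply/negbTE/eqP; lia. Qed.
Lemma Phi_up g s x : Phi g s (up x) =
  if (s < 2 * m) && (x == s) then n + m + 1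
  else if (s < 2 * m) && (x == g s) then 2 * m else up (g x).
Proof. by rewrite /Phi up_q up_t down_up. Qed.


Lemma up_small x : x < 2 * m -> up x = x.
Proof. by rewrite /up => ->. Qed.

Lemma PhiA g s : validn (2 * n) (n - m) g -> opt g s ->
  validn (2 * n + 2) (n - m + 1) (Phi g s).
Proof.
move=> V /andP[hs ho] y hy.
have Vs : s < 2 * m -> [/\ g s < 2 * n, g (g s) = s & n - m <= dist s (g s)].
  by move=> h; apply: V; lia.
have ho' : s < 2 * m -> n + m <= g s.
  by move=> h; move: ho; case: eqP => [?|_ //]; lia.
case: (eqVneq y (n + m + 1)) => [->|yq].
  rewrite Phi_q; split.
  - lia.
  - case: (ltnP s (2 * m)) => h.
      by rewrite -[X in Phi g s X](up_small h) Phi_up h eqxx.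
    have -> : s = 2 * m by lia.
    by rewrite Phi_t ltnn.
  - rewrite /dist; lia.
case: (eqVneq y (2 * m)) => [->|yt].
  rewrite Phi_t; case: ifP => hst.
    have [g1 g2 g3] := Vs hst; have g4 := ho' hst.
    split.
    - exact: up_lt.
    - rewrite Phi_up hst eqxx /=; case: eqP => [e|_] //; lia.
    - move: g1 g3 g4; crush.
  split.
  - lia.
  - rewrite Phi_q; lia.
  - rewrite /dist; lia.
have [x hx ->] : exists2 x, x < 2 * n & y = up x.
  by exists (down y); [apply: down_lt | rewrite up_down].
rewrite Phi_up; have [x1 x2 x3] := V x hx.
case: ifP => [/andP[hst /eqP xs]|c1].
  subst x; split.
  - lia.
  - by rewrite Phi_q up_small.
  - rewrite up_small //; rewrite /dist; lia.
case: ifP => [/andP[hst /eqP xgs]|c2].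
  split.
  - lia.
  - by rewrite Phi_t hst xgs.
  - have g4 := ho' hst; subst x; move: g4 x1; crush.
split.
- exact: up_lt.
- rewrite Phi_up x2.
  case: ifP => [/andP[hst /eqP e]|_].
    by move: c2; rewrite hst -e x2 eqxx.
  case: ifP => [/andP[hst /eqP e]|_ //].
  by case: (Vs hst) => _ gs _; move: c1; rewrite hst -gs -e x2 eqxx.
- exact: span V hx.
Qed.


Lemma PsiPhi g s x : validn (2 * n) (n - m) g -> opt g s -> x < 2 * n ->
  Psi (Phi g s) x = g x.
Proof.
move=> V /andP[hs ho] hx; rewrite /Psi Phi_up.
have tq : (2 * m == n + m + 1) = false by apply/negbTE/eqP; lia.
case: (boolP ((s < 2 * m) && (x == s))) => [/andP[hst /eqP xs]|c1].
  by rewrite eqxx Phi_t hst down_up xs.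
case: (boolP ((s < 2 * m) && (x == g s))) => [/andP[hst /eqP xgs]|c2].
  rewrite tq eqxx Phi_q xgs; have [_ -> _] := V s ltac:(lia).
  rewrite /down; case: ifP => //; lia.
by rewrite up_q up_t down_up.
Qed.

Section PsiSec.
Variable h : nat -> nat.
Hypothesis V : validn (2 * n + 2) (n - m + 1) h.

Let a := h (2 * m).
Let b := h (n + m + 1).
Lemma Va : [/\ a < 2 * n + 2, h a = 2 * m & n + m + 1 <= a].
Proof.
have [a1 a2 a3] := @V (2 * m) ltac:(lia); split => //.
move: a3; rewrite -/a /dist => ?; lia.
Qed.
Lemma aq : b != 2 * m -> n + m + 2 <= a.
Proof.
have [a1 a2 a3] := Va => bt.
have : a != n + m + 1 by apply: contraNneq bt => e; rewrite /b -e a2.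
move/eqP; lia.
Qed.
Lemma Vb : [/\ b < 2 * n + 2, h b = n + m + 1 & b <= 2 * m].
Proof.
have [a1 a2 a3] := @V (n + m + 1) ltac:(lia); split => //.
move: a3 a1; rewrite -/b /dist => ? ?; lia.
Qed.

Lemma Psi_b : b < 2 * m -> Psi h b = down a.
Proof.
move=> hb; have [b1 b2 b3] := Vb.
by rewrite /Psi up_small // -/b b2 eqxx.
Qed.

Lemma PsiV : validn (2 * n) (n - m) (Psi h).
Proof.
have [a1 a2 a3] := Va; have [b1 b2 b3] := Vb.
move=> x hx; set y := up x.
have hy : y < 2 * n + 2 by exact: up_lt.
have [z1 z2 z3] := @V y hy.
have yt := up_t x; have yq := up_q x; rewrite -/y in yt yq.
have tq : (2 * m == n + m + 1) = false by apply/negbTE/eqP; lia.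
rewrite [Psi h x]/Psi -/y.
case: (eqVneq (h y) (n + m + 1)) => [zq|zq].
  have yb : y = b by rewrite -z2 zq.
  rewrite -/a.
  have {}a3 : n + m + 2 <= a by apply: aq; rewrite -yb yt.
  have ha : down a < 2 * n by move: a1 a3; crush.
  split => //.
  - rewrite /Psi (up_down (y := a)) ?a2 ?eqxx ?tq ?eqxx //; last 2 first.
      by apply/eqP; lia.
      by apply/eqP; lia.
    by rewrite -/b -yb /y down_up.
  - have xb : x = b by rewrite -(down_up x) -/y yb; move: b3 yt; rewrite yb; crush.
    rewrite xb; move: a3 b3 yt; rewrite yb; crush.
case: (eqVneq (h y) (2 * m)) => [zt|zt].
  have ya : y = a by rewrite -z2 zt.
  rewrite -/b.
  have bt : b != 2 * m by apply/eqP => e; move: yq; rewrite ya /a -e b2 eqxx.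
  have hb : b < 2 * m by lia.
  have {}a3 := aq bt.
  split.
  - move: hb; crush.
  - rewrite (_ : down b = b); last by move: hb; crush.
    by rewrite Psi_b // -ya /y down_up.
  - have xa : x = a - 2 by rewrite -(down_up x) -/y ya; move: a3; crush.
    rewrite xa; move: a3 hb; crush.
have hz : down (h y) < 2 * n by apply: down_lt.
split => //.
- rewrite /Psi up_down // z2 yq yt /y down_up //.
- rewrite -[X in dist X _](down_up x) -/y; move: z3 zq zt yt yq; crush.
Qed.

Lemma PsiOpt : opt (Psi h) b.
Proof.
have [a1 a2 a3] := Va; have [b1 b2 b3] := Vb.
rewrite /opt b3 /=; case: eqP => //= /eqP bt.
rewrite Psi_b; last by lia.
have := aq bt; crush.
Qed.

Lemma PhiPsi y : y < 2 * n + 2 -> Phi (Psi h) b y = h y.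
Proof.
have [a1 a2 a3] := Va; have [b1 b2 b3] := Vb.
move=> hy.
case: (eqVneq y (n + m + 1)) => [->|yq]; first by rewrite Phi_q.
case: (eqVneq y (2 * m)) => [->|yt].
  rewrite Phi_t; case: ifP => hb.
    have := aq ltac:(apply/eqP; lia) => a4.
    rewrite Psi_b // up_down //; apply/eqP; lia.
  have e : b = 2 * m by lia.
  by rewrite -e b2.
have [x hx ->] : exists2 x, x < 2 * n & y = up x.
  by exists (down y); [apply: down_lt | rewrite up_down].
rewrite Phi_up.
case: ifP => [/andP[hb /eqP xb]|c1].
  by rewrite xb up_small.
case: ifP => [/andP[hb /eqP xb]|c2].
  have := aq ltac:(apply/eqP; lia) => a4.
  rewrite xb Psi_b // up_down ?a2 //; apply/eqP; lia.
have [z1 z2 z3] := @V (up x) (up_lt hx).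
rewrite /Psi.
case: (eqVneq (h (up x)) (n + m + 1)) => [zq|zq].
  have yb : up x = b by rewrite -z2 zq.
  case: (ltnP b (2 * m)) => hb.
    by move: c1; rewrite hb -(down_up x) yb /down; case: ifP => //; lia.
  by move: (up_t x); rewrite yb; case: eqP => //; lia.
case: (eqVneq (h (up x)) (2 * m)) => [zt|zt].
  have ya : up x = a by rewrite -z2 zt.
  case: (ltnP b (2 * m)) => hb.
    by move: c2; rewrite hb Psi_b // -ya down_up eqxx.
  have e : b = 2 * m by lia.
  by move: (up_q x); rewrite ya /a -e b2 eqxx.
by rewrite up_down.
Qed.

End PsiSec.

End Main.


Definition nf N (f : {ffun 'I_N -> 'I_N}) (i : nat) : nat :=
  if (insub i : option 'I_N) is Some o then val (f o) else i.
Definition mkf N (g : nat -> nat) : {ffun 'I_N -> 'I_N} := [ffun i : 'I_N => insubd i (g i)].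

Lemma nfE N (f : {ffun 'I_N -> 'I_N}) (i : 'I_N) : nf f i = f i.
Proof. by rewrite /nf valK. Qed.

Lemma nfE' N (f : {ffun 'I_N -> 'I_N}) i (hi : i < N) : nf f i = f (Ordinal hi).
Proof. by rewrite -nfE. Qed.

Lemma mkfE N (g : nat -> nat) (i : 'I_N) : g i < N -> val (mkf N g i) = g i.
Proof. by move=> h; rewrite ffunE val_insubd h. Qed.

Lemma nf_mkf N (g : nat -> nat) i : i < N -> g i < N -> nf (mkf N g) i = g i.
Proof. by move=> hi hg; rewrite (nfE' _ hi) mkfE. Qed.

Lemma validn_ext N d (g g' : nat -> nat) : (forall i, i < N -> g i = g' i) -> validn N d g -> validn N d g'.
Proof.
move=> E V i hi; have [v1 v2 v3] := V i hi.
by rewrite -!E // -?E // -?E.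
Qed.

Lemma Inv_valid d n (f : {ffun 'I_(n.*2) -> 'I_(n.*2)}) :
  f \in Inv d n -> validn (2 * n) d (nf f).
Proof.
rewrite inE => /forallP H i hi; rewrite mul2n in hi.
have /andP[/eqP e1 e2] := H (Ordinal hi).
rewrite (nfE' _ hi) nfE e1 mul2n; split => //.
Qed.

Lemma valid_Inv d n (g : nat -> nat) : validn (2 * n) d g -> mkf (n.*2) g \in Inv d n.
Proof.
move=> V; rewrite inE; apply/forallP=> i.
have hi : i < 2 * n by rewrite mul2n.
have [v1 v2 v3] := V i hi; have v1' : g i < n.*2 by move: v1; rewrite mul2n.
have e : val (mkf (n.*2) g i) = g i by rewrite mkfE.
have e2 : val (mkf (n.*2) g (mkf (n.*2) g i)) = i.
  by rewrite mkfE e v2.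
apply/andP; split; first by apply/eqP/val_inj.
by rewrite e.
Qed.

Lemma mkf_nf N (f : {ffun 'I_N -> 'I_N}) (g : nat -> nat) : (forall i, i < N -> g i = nf f i) -> mkf N g = f.
Proof.
move=> E; apply/ffunP=> i; apply/val_inj; rewrite mkfE E ?nfE //.
Qed.


Lemma card_nat N (P : pred nat) : #|[set i : 'I_N | P i]| = \sum_(0 <= i < N) P i.
Proof.
rewrite -sum1_card big_mkord big_mkcond /=; apply: eq_bigr => i _.
by rewrite inE; case: (P i).
Qed.

Lemma sum_lt N c : \sum_(0 <= i < N) (i < c) = minn N c.
Proof.
elim: N => [|N IH]; first by rewrite big_geq // min0n.
rewrite big_nat_recr //= IH; case: ltnP => h; lia.
Qed.

Section Count.
Variables n m : nat.
Hypothesis Hm : 3 * m <= n.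
Variable f : {ffun 'I_(n.*2) -> 'I_(n.*2)}.
Hypothesis V : validn (2 * n) (n - m) (nf f).

Lemma finv i : f (f i) = i.
Proof.
have hi : i < 2 * n by rewrite mul2n.
have [_ v2 _] := V hi; apply/val_inj; move: v2; by rewrite !nfE.
Qed.
Lemma fdist (i : 'I_(n.*2)) : n - m <= dist i (f i).
Proof.
have hi : i < 2 * n by rewrite mul2n.
have [_ _ v3] := V hi; by rewrite nfE in v3.
Qed.
Lemma fbound (i : 'I_(n.*2)) : f i < 2 * n.
Proof. by rewrite mul2n. Qed.
Lemma ibound (i : 'I_(n.*2)) : i < 2 * n.
Proof. by rewrite mul2n. Qed.

Lemma card_lt c : c <= 2 * n -> #|[set i : 'I_(n.*2) | i < c]| = c.
Proof.
move=> h; have := card_nat (n.*2) (fun i => i < c); rewrite /= => ->; rewrite sum_lt -mul2n; lia.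
Qed.

Lemma card_ends : #|[set i | f i < i]| = n.
Proof.
set E := [set i | f i < i].
have hS : f @: E = ~: E.
  apply/setP=> i; apply/imsetP/idP.
    case=> j; rewrite !inE => hj ->; rewrite finv; lia.
  rewrite !inE => hi; exists (f i); last by rewrite finv.
  rewrite inE finv; have := fdist i; have := ibound i; rewrite /dist; lia.
have := cardsC E; rewrite -hS card_imset; last exact: (can_inj finv).
rewrite card_ord; lia.
Qed.

Lemma card_EM : #|[set i | (f i < i) && (i < n + m)]| = m.
Proof.
have EH : #|[set i : 'I_(n.*2) | ~~ (i < n + m)]| = n - m.
  have := cardsC [set i : 'I_(n.*2) | i < n + m].
  rewrite card_lt; last lia.
  rewrite card_ord (_ : ~: _ = [set i : 'I_(n.*2) | ~~ (i < n + m)]); first lia.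
  by apply/setP=> i; rewrite !inE.
have := cardsID [set i : 'I_(n.*2) | i < n + m] [set i | f i < i].
rewrite card_ends => e.
have -> : [set i | (f i < i) && (i < n + m)] = [set i | f i < i] :&: [set i : 'I_(n.*2) | i < n + m].
  by apply/setP=> i; rewrite !inE.
suff : [set i | f i < i] :\: [set i : 'I_(n.*2) | i < n + m] = [set i : 'I_(n.*2) | ~~ (i < n + m)] by move=> h; rewrite h EH in e; lia.
apply/setP=> i; rewrite !inE; case: ltnP => //= h.
have := fdist i; have := fbound i; have := ibound i; rewrite /dist; lia.
Qed.

Lemma card_pool : #|[set i : 'I_(n.*2) | (i < 2 * m) && (n + m <= f i)]| = m.
Proof.
set X := [set i : 'I_(n.*2) | i < 2 * m].
set A := [set i : 'I_(n.*2) | (i < 2 * m) && (f i < n + m)].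
have hA : f @: A = [set i | (f i < i) && (i < n + m)].
  apply/setP=> i; apply/imsetP/idP.
    case=> j; rewrite !inE => /andP[h1 h2] ->; rewrite finv.
    have := fdist j; rewrite /dist; lia.
  rewrite !inE => /andP[h1 h2]; exists (f i); last by rewrite finv.
  rewrite inE finv; have := fdist i; rewrite /dist; lia.
have cA : #|A| = m by rewrite -card_EM -hA card_imset //; exact: (can_inj finv).
have := cardsID A X.
rewrite card_lt; last lia.
have -> : X :&: A = A by apply/setP=> i; rewrite !inE; case: ltnP.
have -> : X :\: A = [set i : 'I_(n.*2) | (i < 2 * m) && (n + m <= f i)].
  by apply/setP=> i; rewrite !inE; case: (i < 2 * m); case: ltnP.
lia.
Qed.

End Count.

Lemma sum_trunc N c (P : pred nat) : (forall i, P i -> i < c) -> c <= N ->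
  \sum_(0 <= i < N) P i = \sum_(0 <= i < c) P i.
Proof.
move=> H hc; rewrite (big_cat_nat (n := c)) //= [X in _ + X]big1_seq ?addn0 //.
move=> i /andP[_]; rewrite mem_index_iota => /andP[h1 _].
by case E: (P i) => //; have := H i E; lia.
Qed.

Section Final.
Variables n m : nat.
Hypothesis Hm : 3 * m <= n.
Hypothesis hn : 0 < n.

Lemma Phi_ext (g g' : nat -> nat) s y : (forall i, i < 2 * n -> g i = g' i) ->
  s <= 2 * m -> y < 2 * n + 2 -> Phi n m g s y = Phi n m g' s y.
Proof.
move=> E hs hy; rewrite /Phi.
case: eqP => // yq; case: eqP => [yt|yt].
  by case: ifP => // h; rewrite E //; lia.
have hd : down n m y < 2 * n by apply: down_lt => //; apply/eqP.
case: (boolP (s < 2 * m)) => h /=; last by rewrite E.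
by rewrite !E //; lia.
Qed.

Lemma Psi_ext (h h' : nat -> nat) x : (forall i, i < 2 * n + 2 -> h i = h' i) ->
  x < 2 * n -> Psi n m h x = Psi n m h' x.
Proof.
move=> E hx; have u : up n m x < 2 * n + 2 by apply: up_lt.
rewrite /Psi !E //; lia.
Qed.

Lemma opt_ext (g g' : nat -> nat) s : (forall i, i < 2 * n -> g i = g' i) ->
  opt n m g s = opt n m g' s.
Proof.
move=> E; rewrite /opt; case: (leqP s (2 * m)) => //= h.
by rewrite E //; lia.
Qed.

Definition Psif (f' : {ffun 'I_(n.+1.*2) -> 'I_(n.+1.*2)}) : {ffun 'I_(n.*2) -> 'I_(n.*2)} :=
  mkf (n.*2) (Psi n m (nf f')).

Lemma hq : n + m + 1 < n.+1.*2.
Proof. rewrite -mul2n; lia. Qed.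
Definition qo : 'I_(n.+1.*2) := Ordinal hq.

Definition atq (f' : {ffun 'I_(n.+1.*2) -> 'I_(n.+1.*2)}) : 'I_(n.+1.*2) := f' qo.

Lemma e2 : 2 * n.+1 = 2 * n + 2.
Proof. lia. Qed.

Lemma validI' (f' : {ffun 'I_(n.+1.*2) -> 'I_(n.+1.*2)}) :
  f' \in Inv (n - m + 1) n.+1 -> validn (2 * n + 2) (n - m + 1) (nf f').
Proof. by move/Inv_valid; rewrite e2. Qed.

Lemma main : #|Inv (n - m + 1) n.+1| = (m + 1) * #|Inv (n - m) n|.
Proof.
rewrite -sum1_card (partition_big Psif (mem (Inv (n - m) n))) /=; last first.
  move=> f' /validI' V'; apply: valid_Inv.
  exact: PsiV.
rewrite mulnC -sum_nat_const; apply: eq_bigr => f fI.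
have Vg := Inv_valid fI.
set g := nf f.
transitivity #|[set f' in Inv (n - m + 1) n.+1 | Psif f' == f]|.
  by rewrite -sum1_card; apply: eq_bigl => f'; rewrite !inE.
have fib : forall f', f' \in [set f' in Inv (n - m + 1) n.+1 | Psif f' == f] ->
   [/\ validn (2 * n + 2) (n - m + 1) (nf f'),
       forall i, i < 2 * n -> Psi n m (nf f') i = g i &
       forall y, y < 2 * n + 2 -> nf f' y = Phi n m g (nf f' (n + m + 1)) y].
  move=> f'; rewrite inE => /andP[/validI' V' /eqP E].
  have agree : forall i, i < 2 * n -> Psi n m (nf f') i = g i.
    move=> i hi; rewrite /g -E /Psif nf_mkf; first by [].
      by rewrite -mul2n.
    by have [] := PsiV Hm V' hi; rewrite mul2n.
  split => // y hy.
  rewrite -(PhiPsi Hm V' hy); apply: Phi_ext => //.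
  by have [] := Vb Hm V'.
rewrite -(card_in_imset (f := atq)); last first.
  move=> f1 f2 h1 h2; rewrite /atq => E.
  have [V1 A1 R1] := fib _ h1; have [V2 A2 R2] := fib _ h2.
  apply/ffunP=> y; apply: ord_inj.
  have hy : y < 2 * n + 2 by rewrite -e2 mul2n.
  have q1 : nf f1 (n + m + 1) = f1 qo by exact: (nfE _ qo).
  have q2 : nf f2 (n + m + 1) = f2 qo by exact: (nfE _ qo).
  by rewrite -(nfE f1 y) -(nfE f2 y) R1 // R2 // q1 q2 E.
have -> : [set atq f' | f' in [set f' in Inv (n - m + 1) n.+1 | Psif f' == f]] =
          [set s : 'I_(n.+1.*2) | opt n m g s].
  apply/setP=> s; rewrite inE; apply/imsetP/idP.
    case=> f' hf' ->; have [V' A' R'] := fib _ hf'.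
    have := PsiOpt Hm V'.
    rewrite (opt_ext (g := Psi n m (nf f')) (g' := g)) //.
    have -> : nf f' (n + m + 1) = f' qo by exact: (nfE _ qo).
    done.
  move=> hs.
  have VP := PhiA Hm Vg hs.
  set f' := mkf (n.+1.*2) (Phi n m g s).
  have agreeP : forall y, y < 2 * n + 2 -> nf f' y = Phi n m g s y.
    have e3 : n.+1.*2 = 2 * n + 2 by rewrite -mul2n; lia.
    move=> y hy; apply: nf_mkf; first by rewrite e3.
    by have [a _ _] := VP y hy; rewrite (leq_trans a) // e3.
  exists f'.
    rewrite inE; apply/andP; split.
      by apply: valid_Inv; rewrite e2.
    apply/eqP; apply: mkf_nf => i hi.
    have hi' : i < 2 * n by rewrite mul2n.
    have -> : Psi n m (nf f') i = Psi n m (Phi n m g s) i by apply: Psi_ext.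
    exact: PsiPhi.
  apply: ord_inj; rewrite /atq.
  have -> : nat_of_ord (f' qo) = nf f' (n + m + 1) by symmetry; exact: (nfE _ qo).
  by rewrite agreeP ?Phi_q //; lia.
have -> := card_nat (n.+1.*2) (opt n m g).
have cp := card_pool Hm Vg.
have E : [set i : 'I_(n.*2) | (i < 2 * m) && (n + m <= f i)] =
          [set i : 'I_(n.*2) | (fun j => (j < 2 * m) && (n + m <= g j)) i].
  by apply/setP=> i; rewrite !inE /g nfE.
rewrite E (card_nat (n.*2) (fun j => (j < 2 * m) && (n + m <= g j))) in cp.
rewrite (sum_trunc (c := 2 * m + 1)) ?addn1 ?big_nat_recr //=; first last.
- rewrite -mul2n; lia.
- by move=> i /andP[h _]; lia.
rewrite (sum_trunc (c := 2 * m)) in cp; first last.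
- rewrite -mul2n; lia.
- by move=> i /andP[h _].
have -> : opt n m g (2 * m) = true by rewrite /opt leqnn eqxx.
rewrite addn1 -[in RHS]cp; congr _.+1.
apply: eq_big_seq => i; rewrite mem_index_iota => /andP[_ hi]; rewrite /opt ltnW //= (ltn_eqF hi) hi //.
Qed.

End Final.

Theorem theorem1 (n k : nat) :
  0 < n -> 0 < k -> 3 * (n - k) <= n -> k <= n ->
  #|K k.+1 n.+1| = (n - k + 1) * #|K k n|.
Proof.
move=> hn hk h3 hkn.
rewrite !cardK_Inv //.
have M := main h3 hn.
have e1 : n - (n - k) = k by lia.
by rewrite e1 addn1 in M.
Qed.
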